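(* Let $m\ge1$, $N\ge1$ and let $i$ be an integer with $0\le i\le mN$. For all integers $b_1,\dots,b_N\in\{0,\dots,m\}$ with $\sum_{j=1}^N b_j=i$, $$\sum_{j=1}^N 2^{-b_j}\;\ge\;\Big(N-i+\lfloor i/N\rfloor N\Big)2^{-\lfloor i/N\rfloor}+\Big(i-\lfloor i/N\rfloor N\Big)2^{-\lceil i/N\rceil},$$ where the right-hand side is the value of $\sum_j 2^{-b_j}$ for the pattern in which $N-i+\lfloor i/N\rfloor N$ symbols contain $\lfloor i/N\rfloor$ erased bits and $i-\lfloor i/N\rfloor N$ symbols contain $\lceil i/N\rceil$ erased bits. Consequently, under the proportional multiplicity assignment, among all patterns of $i$ erased bits this evenly spread pattern is the worst case for the ASD decoding condition $\eta\ge K-1$, where $\eta=\sum_j 2^{-b_j}$.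
   Context: Setting: a Reed–Solomon code of length $N$ and dimension $K$ over $GF(2^m)$ whose symbols are sent as $m$ bits each over a binary erasure channel; $b_j$ is the number of erased bits in the $j$-th received symbol. Under the proportional multiplicity assignment (each of the $2^{b_j}$ candidates of symbol $j$ gets multiplicity $M2^{-b_j}$, $M>0$), the score is $S=M\eta$ and the cost is $C=\frac12M^2\eta$, and the ASD sufficient condition $S\ge\sqrt{2(K-1)C}$ is equivalent to $\eta\ge K-1$. *)

(* Defs.v *)
From mathcomp Require Import all_boot all_order all_algebra.
Set Implicit Arguments. Unset Strict Implicit. Unset Printing Implicit Defensive.

Definition ceil_div (i N : nat) : nat := ((i + N.-1) %/ N)%N.

(* Main.v *)
Require Import Defs.
From mathcomp Require Import all_boot all_order all_algebra zify ring lra.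
Import Order.TTheory GRing.Theory Num.Theory.
Local Open Scope ring_scope.

Lemma key (R : realFieldType) (b q : nat) :
  (2:R) ^- q - (b%:R - q%:R) * (2:R) ^- q.+1 <= (2:R) ^- b.
Proof.
have h2 : (2:R) ^- q = 2 * (2:R) ^- q.+1.
  by rewrite exprS invfM mulrA divff ?mul1r // pnatr_eq0.
rewrite h2 -mulrBl.
have hx : 0 < (2:R) ^- q.+1 by rewrite invr_gt0 exprn_gt0.
case: (leqP b q.+1) => hb.
- have [k hk] : exists k, q.+1 = (b + k)%N by exists (q.+1 - b)%N; lia.
  have e : (2:R) ^- b = 2 ^+ k * (2:R) ^- q.+1.
    by rewrite hk exprD invfM mulrA mulrC mulrA mulVf ?mul1r // expf_neq0 // pnatr_eq0.
  rewrite e ler_pM2r //.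
  have -> : (2:R) - (b%:R - q%:R) = (k.+1)%:R.
    have H : ((q + 1)%N%:R : R) = ((b + k)%N)%:R by rewrite addn1 hk.
    rewrite !natrD in H. rewrite -addn1 natrD. lra.
  have : (k.+1 <= 2 ^ k)%N by rewrite ltn_expl.
  by rewrite -(ler_nat R) natrX.
- apply: le_trans (_ : 0 <= _); last by rewrite invr_ge0 exprn_ge0.
  rewrite pmulr_lle0 // subr_le0 lerBrDr -natrD ler_nat.
  lia.
Qed.

Theorem lemma4 (R : realFieldType) (m N i : nat)
  (hm : (1 <= m)%N) (hN : (1 <= N)%N) (hi : (i <= m * N)%N)
  (b : 'I_N -> nat)
  (hb : forall j, (b j <= m)%N)
  (hsum : (\sum_(j < N) b j)%N = i) :
  \sum_(j < N) (2 : R) ^- (b j) >=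
    (N%:R - i%:R + ((i %/ N) * N)%N%:R) * (2 : R) ^- (i %/ N)
    + (i%:R - ((i %/ N) * N)%N%:R) * (2 : R) ^- (ceil_div i N).
Proof.
set q := (i %/ N)%N.
apply: le_trans (ler_sum _ (fun j _ => key R (b j) q)).
rewrite sumrB -mulr_suml sumrB sumr_const card_ord -natr_sum hsum.
rewrite sumr_const card_ord.
have h2 : (2:R) ^- q = 2 * (2:R) ^- q.+1.
  by rewrite exprS invfM mulrA divff ?mul1r // pnatr_eq0.
have [hr|hr] : (q * N = i)%N \/ (ceil_div i N = q.+1).
  rewrite /ceil_div /q. have := divn_eq i N. have := ltn_pmod i hN.
  move=> hlt hdiv.
  case: (posnP (i %% N)) => h0.
  + left; lia.
  + right. apply/eqP; rewrite eqn_leq; apply/andP; split.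
    * rewrite -ltnS ltn_divLR; last lia. rewrite mulSn. nia.
    * rewrite leq_divRL; last lia. lia.
- rewrite -[q%:R *+ N]mulr_natr -natrM hr.
  rewrite le_eqVlt; apply/orP; left; apply/eqP; ring.
- rewrite hr -[q%:R *+ N]mulr_natr. rewrite natrM h2.
  rewrite le_eqVlt; apply/orP; left; apply/eqP; ring.
Qed.
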